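(* Let $(\tau,T)$ be a dynamic pricing process with $P(\tau<\infty)=1$. Then $(\tau,T)$ is DIR compatible if and only if \[\lambda\int_0^\infty w_-\big(P(T(\tau)-s>y\mid T(\tau)>s)\big)dy\le\theta\quad\text{for all } s \text{ with } P(T(\tau)>s)>0.\]
   Context: Standing assumptions: $\theta>0$, $\lambda>0$; $w_+,w_-:[0,1]\to[0,1]$ strictly increasing, thrice differentiable, $w_\pm(0)=0$, $w_\pm(1)=1$, $w_\pm'(0)>1$, $w_\pm'(1)>1$, $w_\pm'''>0$. A cumulative payment function is $T:\mathbb{R}^+\to\mathbb{R}^+$ of the form $T(t)=\int_0^tf(s)ds+\sum_i1_{t_i<t}T_i$, with $f\ge0$ integrable and $(t_i),(T_i)$ countable sequences of nonnegative numbers, $t_i$ increasing. A stopping time is a random variable $\tau\in[0,\infty]$ whose CDF is the sum of a nondecreasing nonnegative absolutely continuous function and a nondecreasing nonnegative jump function. A dynamic pricing process is a pair $(\tau,T)$; it is DIR compatible if for every $s$ with $P(\tau>s)>0$, \[\theta\,w_+(P(\tau<\infty\mid\tau>s))-\lambda\int_0^\infty w_-\big(P(T(\tau)-T(s)>y\mid\tau>s)\big)dy\ge0.\] *)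

(* Defs.v *)
From HB Require Import structures.
From mathcomp Require Import all_boot all_order all_algebra.
From mathcomp Require Import all_classical all_reals all_analysis.
From mathcomp Require Import measurable_realfun.
Set Implicit Arguments. Unset Strict Implicit. Unset Printing Implicit Defensive.
Import Order.TTheory GRing.Theory Num.Theory.
Import numFieldNormedType.Exports.
Local Open Scope classical_set_scope.
Local Open Scope ring_scope.

Section defs.
Variable R : realType.

Definition deriv01 (f f' : R -> R) : Prop :=
  forall x, 0 <= x <= 1 ->
    (fun y => (f y - f x) / (y - x)) @ within [set y | 0 <= y <= 1 /\ y != x] (nbhs x)
      --> f' x.

Definition weighting (w : R -> R) : Prop :=
  (forall x, 0 <= x <= 1 -> 0 <= w x <= 1) /\
  (forall x y, 0 <= x <= 1 -> 0 <= y <= 1 -> x < y -> w x < w y) /\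
  w 0 = 0 /\ w 1 = 1 /\
  exists w1 w2 w3 : R -> R,
    [/\ deriv01 w w1, deriv01 w1 w2, deriv01 w2 w3,
        1 < w1 0 /\ 1 < w1 1 & forall x, 0 <= x <= 1 -> 0 < w3 x].

(* Cumulative payment function T(t) = int_0^t f + sum_i 1_{t_i < t} T_i on R^+. *)
Definition cumulative_payment (T : R -> R) : Prop :=
  exists (f : R -> R) (ti Ti : nat -> R),
    [/\ (forall x, 0 <= x -> 0 <= f x),
        (@lebesgue_measure R).-integrable `[0%R, +oo[%classic (EFin \o f),
        (forall i, 0 <= ti i /\ 0 <= Ti i),
        {homo ti : i j / (i <= j)%N >-> i <= j} &
        forall t, 0 <= t ->
          0 <= T t /\
          (fun n => \sum_(i < n) (if ti i < t then Ti i else 0)) @ \oo -->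
            T t - fine (\int[@lebesgue_measure R]_(x in `[0, t]) (f x)%:E)].

Definition abs_cont_Rp (F : R -> R) : Prop :=
  forall e : R, 0 < e -> exists2 d : R, 0 < d &
    forall (n : nat) (a b : nat -> R),
      (forall k, (k < n)%N -> 0 <= a k <= b k) ->
      (forall k, (k.+1 < n)%N -> b k <= a k.+1) ->
      \sum_(k < n) (b k - a k) < d ->
      \sum_(k < n) `|F (b k) - F (a k)| < e.

Definition jump_fn (J : R -> R) : Prop :=
  exists a u v : nat -> R,
    (forall i, [/\ 0 <= a i, 0 <= u i & 0 <= v i]) /\
    forall t, 0 <= t ->
      (fun n => \sum_(i < n) ((if a i < t then u i else 0) +
                              (if a i <= t then v i else 0))) @ \oo --> J t.

Definition nondecr_nonneg (F : R -> R) : Prop :=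
  (forall t, 0 <= t -> 0 <= F t) /\
  (forall s t, 0 <= s -> s <= t -> F s <= F t).

Context {d : measure_display} {Omega : measurableType d}.

Definition stopping_time (P : probability Omega R) (tau : Omega -> \bar R) : Prop :=
  [/\ measurable_fun [set: Omega] tau,
      (forall w, (0 <= tau w)%E) &
      exists Fa J : R -> R,
        [/\ nondecr_nonneg Fa, abs_cont_Rp Fa, nondecr_nonneg J, jump_fn J &
            forall t, 0 <= t -> fine (P [set w | (tau w <= t%:E)%E]) = Fa t + J t]].

Definition Tat (T : R -> R) (x : \bar R) : \bar R :=
  match x with
  | r%:E => (T r)%:E
  | +oo%E => ereal_sup [set (T r)%:E | r in [set r : R | 0 <= r]]
  | -oo%E => 0%E
  end.

Definition condP (P : probability Omega R) (A B : set Omega) : R :=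
  fine (P (A `&` B)) / fine (P B).

Definition dynamic_pricing_process (P : probability Omega R)
  (tau : Omega -> \bar R) (T : R -> R) : Prop :=
  stopping_time P tau /\ cumulative_payment T.

Definition DIR_compatible (theta lambda : R) (wp wm : R -> R)
  (P : probability Omega R) (tau : Omega -> \bar R) (T : R -> R) : Prop :=
  forall s : R, 0 <= s -> (0 < P [set w | (s%:E < tau w)%E])%E ->
    (0 <= (theta * wp (condP P [set w | (tau w < +oo)%E] [set w | (s%:E < tau w)%E]))%:E
         - lambda%:E *
           \int[@lebesgue_measure R]_(y in `[0%R, +oo[%classic)
              (wm (condP P [set w | (y%:E < Tat T (tau w) - (T s)%:E)%E]
                           [set w | (s%:E < tau w)%E]))%:E)%E.

End defs.

(* Main.v *)
Require Import Defs.
From HB Require Import structures.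
From mathcomp Require Import all_boot all_order all_algebra.
From mathcomp Require Import all_classical all_reals all_analysis.
From mathcomp Require Import measurable_realfun.
From mathcomp Require Import lra.
Import Order.TTheory GRing.Theory Num.Theory.
Import numFieldNormedType.Exports.
Local Open Scope classical_set_scope.
Local Open Scope ring_scope.
Lemma T_facts (R : realType) (T : R -> R) : cumulative_payment T ->
  [/\ T 0 = 0, (forall s t, 0 <= s -> s <= t -> T s <= T t) &
   forall t0 c, 0 < t0 -> (forall t, 0 <= t -> t < t0 -> T t <= c) -> T t0 <= c].
Proof.
case=> f [ti] [Ti] [f0 intf tiTi _ HT].
set mu := @lebesgue_measure R.
set I := fun t => fine (\int[mu]_(x in `[0, t]) (f x)%:E).
set p := fun t n => \sum_(i < n) (if ti i < t then Ti i else 0).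
have hp t : 0 <= t -> p t @ \oo --> T t - I t by move=> /HT[].
have pnd t : {homo p t : n m / (n <= m)%N >-> n <= m}.
  apply/nondecreasing_seqP => n; rewrite /p big_ord_recr /= lerDl.
  by case: ifP => // _; case: (tiTi n).
have pleS t n : 0 <= t -> p t n <= T t - I t.
  move=> t0; have := nondecreasing_cvgn_le (pnd t) (cvgP _ (hp t t0)) n.
  by rewrite (cvg_lim (@Rhausdorff R) (hp t t0)).
have intS t : 0 <= t -> mu.-integrable `[0, t] (EFin \o f).
  move=> t0; apply: integrableS intf => //= x /=; rewrite !in_itv /= => /andP[->] //.
have mf := measurable_int mu intf.
have Imono s t : 0 <= s -> s <= t -> I s <= I t.
  move=> s0 st; have t0 : 0 <= t by exact: le_trans s0 st.
  apply: fine_le; [exact: integrable_fin_num (intS _ s0)|exact: integrable_fin_num (intS _ t0)|].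
  apply: (@ge0_subset_integral _ _ _ mu _ _ _ _ (EFin \o f)) => //.
  - apply: measurable_funS mf => //= x /=; rewrite !in_itv /= => /andP[->] //.
  - by move=> x /=; rewrite in_itv /= lee_fin => /andP[/f0].
  - by apply: subset_itvl; rewrite bnd_simp.
have I0 : I 0 = 0 by rewrite /I set_itv1 integral_set1.
split.
- have : p 0 @ \oo --> 0.
    apply: cvg_near_cst; apply: nearW => n; rewrite /p big1 // => i _.
    by case: ifP => //; case: (tiTi i) => h _; rewrite ltNge h.
  move=> H0; have e1 := cvg_lim (@Rhausdorff R) H0.
  rewrite (cvg_lim (@Rhausdorff R) (hp 0 (lexx _))) in e1.
  move: e1; rewrite I0 => e1; have := e1 eventually_filter; lra.
- move=> s t s0 st.
  have : T s - I s <= T t - I t.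
    apply: (ler_cvg_to (hp s s0) (hp t (le_trans s0 st))).
    apply: nearW => n; apply: ler_sum => i _.
    case: ifP => h1; case: ifP => h2 //.
      by move: h2; rewrite (lt_le_trans h1 st).
    by case: (tiTi i).
  have := Imono s t s0 st; lra.
move=> t0 c t0pos Hc.
rewrite leNgt; apply/negP => Hlt.
set e := T t0 - c.
have e0 : 0 < e by rewrite subr_gt0.
have e20 : 0 < e / 2 by rewrite divr_gt0.
have ht0 := ltW t0pos.
have hI : \forall t \near t0^'-, `|I t0 - I t| < e / 2.
  have := parameterized_integral_continuous (ltW t0pos) (intS _ ht0).
  move=> /(continuous_within_itvP _ t0pos) [_ _ hl].
  move: hl => /cvgrPdist_lt /(_ (e/2) e20).
  by apply: filterS => t.
have [N HN] : exists N, T t0 - I t0 - p t0 N < e / 2.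
  have [N _ HN] := (cvgrPdist_lt _ _).1 (hp t0 ht0) (e/2) e20.
  exists N; have := HN N (leqnn N).
  have := ler_norm (T t0 - I t0 - p t0 N); rewrite /=; lra.
have hS : \forall t \near t0^'-, forall i, (i < N)%N -> ti i < t0 -> ti i < t.
  elim: (N) => [|n IH]; first by apply: nearW => t i; rewrite ltn0.
  case: (ltP (ti n) t0) => hn.
  - apply: filterS2 IH (nbhs_left_gt hn) => t H1 H2 i.
    rewrite ltnS leq_eqVlt => /orP[/eqP->|]; first by [].
    exact: H1.
  - apply: filterS IH => t H1 i.
    rewrite ltnS leq_eqVlt => /orP[/eqP->|]; last exact: H1.
    by rewrite ltNge hn.
have hall : \forall t \near t0^'-, ((`|I t0 - I t| < e / 2 /\
    forall i, (i < N)%N -> ti i < t0 -> ti i < t) /\ (0 < t /\ t < t0)).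
  apply: filterI; apply: filterI => //.
  exact: nbhs_left_gt.
  exact: nbhs_left_lt.
have [t [[h1 h2] [h3 h4]]] := filter_ex hall.
have pe : p t N = p t0 N.
  apply: eq_bigr => i _; case: ifP => hi; case: ifP => hi' //.
    by move: hi'; rewrite (lt_trans hi h4).
  by move: hi; rewrite (h2 i (ltn_ord i) hi').
have := pleS t N (ltW h3).
have := Imono t t0 (ltW h3) (ltW h4).
have := Hc t (ltW h3) h4.
have := ler_norm (I t0 - I t).
rewrite pe; rewrite /e in HN h1 *; lra.
Qed.
Section helpers.
Context (R : realType) (d : measure_display) (Omega : measurableType d)
  (P : probability Omega R).

Lemma Tat_mono (T : R -> R) : (forall s t, 0 <= s -> s <= t -> T s <= T t) ->
  forall x y : \bar R, (0 <= x)%E -> (x <= y)%E -> (Tat T x <= Tat T y)%E.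
Proof.
move=> Tm [r| |] [r'| |] //=; rewrite ?lee_fin.
- by move=> r0 rr'; rewrite Tm.
- by move=> r0 _; apply: ereal_sup_ubound; exists r.
Qed.

Lemma upset_meas (tau : Omega -> \bar R) : measurable_fun setT tau ->
  (forall w, (0 <= tau w)%E) -> forall U : \bar R -> Prop,
  (forall x y, (0 <= x)%E -> (x <= y)%E -> U x -> U y) ->
  measurable [set w | U (tau w)].
Proof.
move=> mtau tau0 U Um.
set V := [set x | (0 <= x)%E /\ U x].
set a := ereal_inf V.
case: (pselect (V a)) => Va.
- have -> : [set w | U (tau w)] = [set w | (a <= tau w)%E].
    apply/seteqP; split => w /=.
      by move=> Uw; apply: ereal_inf_lbound; split.
    by move=> aw; case: Va => a0 Ua; exact: Um aw Ua.
  rewrite -[X in measurable X]setTI.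
  by rewrite -preimage_itvcy; apply: mtau => //; exact: emeasurable_itv.
- have -> : [set w | U (tau w)] = [set w | (a < tau w)%E].
    apply/seteqP; split => w /=.
      move=> Uw; rewrite lt_neqAle ereal_inf_lbound ?andbT; last by split.
      by apply/eqP => aw; apply: Va; rewrite aw; split.
    move=> /ereal_inf_lt [y [y0 Uy] yw].
    exact: Um (ltW yw) Uy.
  rewrite -[X in measurable X]setTI.
  by rewrite -preimage_itvoy; apply: mtau => //; exact: emeasurable_itv.
Qed.

Definition pr (A : set Omega) : R := fine (P A).

Lemma prE A : measurable A -> P A = (pr A)%:E.
Proof. by move=> mA; rewrite fineK // fin_num_measure. Qed.

Lemma pr_ge0 A : 0 <= pr A.
Proof. exact: fine_ge0. Qed.

Lemma pr_le1 A : measurable A -> pr A <= 1.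
Proof. by move=> mA; rewrite -lee_fin -prE // probability_le1. Qed.

Lemma pr_le A B : measurable A -> measurable B -> A `<=` B -> pr A <= pr B.
Proof.
move=> mA mB AB; rewrite -lee_fin -!prE //; apply: le_measure => //; rewrite inE //.
Qed.

Lemma condP01 A B : measurable A -> measurable B ->
  0 <= condP P A B <= 1.
Proof.
move=> mA mB; rewrite /condP -/(pr _) -/(pr _).
have h0 := pr_ge0 B; have := pr_ge0 (A `&` B).
have hle : pr (A `&` B) <= pr B by apply: pr_le; [exact: measurableI|exact: mB|exact: subIsetr].
rewrite le_eqVlt in h0; case/orP: h0 => [/eqP <-|hB]; first by rewrite invr0 mulr0 lexx ler01.
move=> hAB; rewrite divr_ge0 //=; last exact: ltW.
by rewrite ler_pdivrMr // mul1r.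
Qed.

Lemma condP_le A1 A2 B : measurable A1 -> measurable A2 -> measurable B ->
  A1 `<=` A2 -> condP P A1 B <= condP P A2 B.
Proof.
move=> m1 m2 mB A12; rewrite /condP -!/(pr _).
apply: ler_wpM2r; first by rewrite invr_ge0 pr_ge0.
apply: pr_le; try exact: measurableI.
by move=> w [? ?]; split => //; apply: A12.
Qed.

Lemma condP_cmp A1 B1 A2 B2 : measurable A1 -> measurable B1 ->
  measurable A2 -> measurable B2 ->
  A1 `&` B1 `<=` A2 `&` B2 -> B2 `<=` B1 -> 0 < pr B2 ->
  condP P A1 B1 <= condP P A2 B2.
Proof.
move=> m1 n1 m2 n2 AB BB hB2.
rewrite /condP -!/(pr _).
have hB1 : pr B2 <= pr B1 by apply: pr_le.
have h1 : pr (A1 `&` B1) <= pr (A2 `&` B2) by apply: pr_le; try exact: measurableI.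
apply: (@le_trans _ _ (pr (A2 `&` B2) / pr B1)).
  by apply: ler_wpM2r => //; rewrite invr_ge0 pr_ge0.
apply: ler_wpM2l; first exact: pr_ge0.
by rewrite lef_pV2 // posrE (lt_le_trans hB2).
Qed.

Lemma condP_null A B C : measurable A -> measurable B -> measurable C ->
  A `&` B `<=` C -> pr C = 0 -> condP P A B = 0.
Proof.
move=> mA mB mC ABC hC; rewrite /condP -!/(pr _).
have : pr (A `&` B) <= pr C by apply: pr_le => //; exact: measurableI.
rewrite hC => h; have := pr_ge0 (A `&` B).
move=> h'; have -> : pr (A `&` B) = 0 by apply/le_anti; rewrite h h'.
by rewrite mul0r.
Qed.

Lemma wmono (w : R -> R) : weighting w ->
  forall x y, 0 <= x <= 1 -> 0 <= y <= 1 -> x <= y -> w x <= w y.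
Proof.
case=> _ [wi _] x y hx hy; rewrite le_eqVlt => /orP[/eqP->//|xy].
exact/ltW/wi.
Qed.

Lemma wge0 (w : R -> R) : weighting w -> forall x, 0 <= x <= 1 -> 0 <= w x.
Proof. by case=> h _ x /h /andP[]. Qed.

Lemma int_cmp (g1 g2 : R -> R) : nonincreasing_fun g1 -> nonincreasing_fun g2 ->
  (forall y, 0 <= y -> 0 <= g1 y /\ g1 y <= g2 y) ->
  (\int[@lebesgue_measure R]_(y in `[0%R, +oo[%classic) (g1 y)%:E <=
   \int[@lebesgue_measure R]_(y in `[0%R, +oo[%classic) (g2 y)%:E)%E.
Proof.
move=> n1 n2 h.
apply: ge0_le_integral => //.
- by move=> y /=; rewrite in_itv /= andbT lee_fin => /h [].
- by apply/measurable_EFinP; exact: nonincreasing_measurable.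
- by apply/measurable_EFinP; exact: nonincreasing_measurable.
- by move=> y /=; rewrite in_itv /= andbT lee_fin => /h [].
Qed.

Lemma g_noninc (tau : Omega -> \bar R) (T : R -> R) (w : R -> R) (c : R) B :
  weighting w -> measurable_fun setT tau -> (forall x, (0 <= tau x)%E) ->
  (forall s t, 0 <= s -> s <= t -> T s <= T t) -> measurable B ->
  nonincreasing_fun (fun y => w (condP P [set x | (y%:E < Tat T (tau x) - c%:E)%E] B)).
Proof.
move=> wW mtau tau0 Tm mB.
have mA y : measurable [set x | (y%:E < Tat T (tau x) - c%:E)%E].
  apply: (@upset_meas tau mtau tau0 (fun x => (y%:E < Tat T x - c%:E)%E)) => a b a0 ab; rewrite !lteBrDl //.
  by move=> h; apply: (lt_le_trans h); exact: Tat_mono.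
move=> y1 y2 y12; apply: wmono => //; try exact: condP01.
apply: condP_le => // x /=; apply: le_lt_trans; by rewrite lee_fin.
Qed.

End helpers.
Arguments pr {R d Omega} P A.

Theorem lemma3 (R : realType) (theta lambda : R) (wp wm : R -> R)
  (d : measure_display) (Omega : measurableType d) (P : probability Omega R)
  (tau : Omega -> \bar R) (T : R -> R) :
  0 < theta -> 0 < lambda -> weighting wp -> weighting wm ->
  dynamic_pricing_process P tau T ->
  P [set w | (tau w < +oo)%E] = 1%E ->
  (DIR_compatible theta lambda wp wm P tau T <->
   forall s : R, 0 <= s -> (0 < P [set w | (s%:E < Tat T (tau w))%E])%E ->
     (lambda%:E *
        \int[@lebesgue_measure R]_(y in `[0%R, +oo[%classic)
           (wm (condP P [set w | (y%:E < Tat T (tau w) - s%:E)%E]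
                        [set w | (s%:E < Tat T (tau w))%E]))%:E <= theta%:E)%E).
Proof.
move=> th0 la0 wpW wmW [[mtau tau0 _] cT] Pfin.
have [T0 Tm Tcl] := T_facts R T cT.
have mA y c : measurable [set w | (y%:E < Tat T (tau w) - c%:E)%E].
  apply: (@upset_meas _ _ _ tau mtau tau0 (fun x => (y%:E < Tat T x - c%:E)%E)) => a b a0 ab.
  by rewrite !lteBrDl // => h; apply: (lt_le_trans h); exact: Tat_mono.
have mL c : measurable [set w | (c%:E < Tat T (tau w))%E].
  apply: (@upset_meas _ _ _ tau mtau tau0 (fun x => (c%:E < Tat T x)%E)) => a b a0 ab.
  by move=> h; apply: (lt_le_trans h); exact: Tat_mono.
have mS s : measurable [set w | (s%:E < tau w)%E].
  apply: (@upset_meas _ _ _ tau mtau tau0 (fun x => (s%:E < x)%E)) => a b a0 ab.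
  by move=> h; apply: (lt_le_trans h).
have mF : measurable [set w | (tau w < +oo)%E].
  rewrite -[X in measurable X]setTI.
  by rewrite -preimage_itvNyo; apply: mtau => //; exact: emeasurable_itv.
have DIRiff s I : (0 < P [set w | (s%:E < tau w)%E])%E ->
    (0 <= (theta * wp (condP P [set w | (tau w < +oo)%E] [set w | (s%:E < tau w)%E]))%:E
         - lambda%:E * I)%E <-> (lambda%:E * I <= theta%:E)%E.
  move=> hpos.
  have -> : condP P [set w | (tau w < +oo)%E] [set w | (s%:E < tau w)%E] = 1.
    have SF : P ([set w | (s%:E < tau w)%E] `\` [set w | (tau w < +oo)%E]) = 0%E.
      apply/le_anti; rewrite measure_ge0 andbT.
      apply: (@le_trans _ _ (P (~` [set w | (tau w < +oo)%E]))).
        apply: le_measure; rewrite ?inE; [exact: measurableD| exact: measurableC| by move=> w [] ].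
      by rewrite probability_setC // Pfin subee.
    have e : P ([set w | (tau w < +oo)%E] `&` [set w | (s%:E < tau w)%E]) =
             P [set w | (s%:E < tau w)%E].
      rewrite setIC [RHS](measureDI P (mS s) mF) [X in (X + _)%E](_ : _ = 0%E) ?add0e //.
    rewrite /condP e divff //; apply: lt0r_neq0; apply: fine_gt0; rewrite hpos /=.
    exact: (le_lt_trans (probability_le1 _ _) (ltry _)).
  case: (wpW) => _ [_ [_ [wp1 _]]]; rewrite wp1.
  by rewrite mulr1 sube_ge0 //; apply/orP; right.
have Tge0 t : 0 <= t -> 0 <= T t by move=> t0; rewrite -T0 Tm.
have lam0 : (0 <= lambda%:E)%E by rewrite lee_fin ltW.
have gn c B : measurable B -> nonincreasing_fun
    (fun y => wm (condP P [set x | (y%:E < Tat T (tau x) - c%:E)%E] B)).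
  by move=> mB; apply: g_noninc.
split.
-
  move=> H s' s'0 hpos.
  have [w0 hw0] : exists w, (s'%:E < Tat T (tau w))%E.
    apply/not_existsP => hn; move: hpos.
    rewrite (_ : [set w | _] = set0) ?measure0 ?ltxx //.
    by apply/seteqP; split => w //= hw; apply: (hn w).
  have [r0 [r00 hr0]] : exists r, 0 <= r /\ s' < T r.
    move: hw0 (tau0 w0); case: (tau w0) => [r| |] //=.
    - by rewrite lte_fin lee_fin => h1 h2; exists r.
    - move=> /ereal_sup_gt [y [r /= r0 <-]]; rewrite lte_fin => h _; by exists r.
  set Aset := [set t | 0 <= t /\ T t <= s'].
  have A0 : Aset 0 by split; rewrite ?T0.
  have Aub : ubound Aset r0.
    move=> t [t0 Tt]; rewrite leNgt; apply/negP => rt.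
    by move: (Tm _ _ r00 (ltW rt)); rewrite leNgt (le_lt_trans Tt hr0).
  have hsup : has_sup Aset by split; [exists 0 | exists r0].
  set t0 := sup Aset.
  have t00 : 0 <= t0 by apply: ub_le_sup => //; exists r0.
  have below t : 0 <= t -> t < t0 -> T t <= s'.
    move=> t0' tt0; have [a [a0 Ta] ha] := @sup_adherent _ Aset (t0 - t) (ltac:(by rewrite subr_gt0)) hsup.
    apply: le_trans Ta; apply: Tm => //; apply: ltW; move: ha; rewrite /t0.
    by rewrite opprB addrC subrK.
  have Tt0 : T t0 <= s'.
    move: t00; rewrite le_eqVlt => /orP[/eqP <-|t0p]; first by rewrite T0.
    exact: Tcl.
  have above t : t0 < t -> s' < T t.
    move=> tt; rewrite ltNge; apply/negP => Tt.
    have : Aset t by split => //; apply: le_trans (ltW tt).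
    by move=> /(ub_le_sup (ex_intro _ r0 Aub)); rewrite /t0 leNgt tt.
  set Dt := [set w | (t0%:E < tau w)%E].
  set Dl := [set w | (s'%:E < Tat T (tau w))%E].
  have DtDl : Dt `<=` Dl.
    rewrite /Dt /Dl => w /=; case: (tau w) => [r| |] //=.
    - by rewrite !lte_fin; exact: above.
    - move=> _; apply: (lt_le_trans (_ : s'%:E < (T r0)%:E)%E); first by rewrite lte_fin.
      by apply: ereal_sup_ubound; exists r0.
  have NlNt y : [set w | (y%:E < Tat T (tau w) - s'%:E)%E] `&` Dl `<=`
                [set w | (y%:E < Tat T (tau w) - (T t0)%:E)%E] `&` Dt.
    rewrite /Dt /Dl => w /= [h1 h2]; split.
      apply: (lt_le_trans h1); apply: leeD => //; by rewrite lee_fin lerN2.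
    move: h2 (tau0 w); case: (tau w) => [r| |] //=.
    rewrite !lte_fin lee_fin => h2 r0'; rewrite ltNge; apply/negP => rt.
    by move: (le_trans (Tm _ _ r0' rt) Tt0); rewrite leNgt h2.
    by move=> *; exact: ltry.
  have mDt : measurable Dt by exact: mS.
  have mDl : measurable Dl by exact: mL.
  case: (ltP 0 (pr P Dt)) => hDt.
  + have := H t0 t00; rewrite prE // lte_fin => /(_ hDt).
    move/(DIRiff t0 _ (_ : (0 < P Dt)%E)); rewrite prE // lte_fin => /(_ hDt) hI.
    apply: (le_trans _ hI); apply: lee_wpmul2l => //.
    apply: int_cmp; [exact: gn|exact: gn|] => y y0; split.
      by apply: wge0 => //; apply: condP01.
    apply: wmono => //; try exact: condP01.
    by apply: condP_cmp => //; exact: NlNt.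
  + have hDt0 : pr P Dt = 0 by apply/le_anti; rewrite hDt pr_ge0.
    rewrite integral0_eq ?mule0 ?lee_fin ?ltW // => y /=; rewrite in_itv /= andbT => y0.
    have hz : condP P [set w | (y%:E < Tat T (tau w) - s'%:E)%E] Dl = 0.
      apply: (@condP_null _ _ _ _ _ _ Dt (mA y s') mDl mDt _ hDt0).
      by move=> w /NlNt [].
    by rewrite hz; case: wmW => _ [_ [h0 _]]; congr (_%:E); exact: h0.
-
  move=> H s s0 hpos; apply/DIRiff => //.
  set c := T s.
  have c0 : 0 <= c by exact: Tge0.
  set Ds := [set w | (s%:E < tau w)%E].
  set Dl := [set w | (c%:E < Tat T (tau w))%E].
  have DlDs : Dl `<=` Ds.
    rewrite /Dl /Ds => w /=; move: (tau0 w); case: (tau w) => [r| |] //=.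
    rewrite lee_fin !lte_fin => r0 h; rewrite ltNge; apply/negP => rs.
    by move: (Tm _ _ r0 rs); rewrite leNgt h.
    by move=> *; exact: ltry.
  have NtNl y : 0 <= y -> [set w | (y%:E < Tat T (tau w) - c%:E)%E] `&` Ds `<=`
                [set w | (y%:E < Tat T (tau w) - c%:E)%E] `&` Dl.
    rewrite /Ds /Dl => y0 x /= [h1 h2]; split => //.
    move: h1; case: (Tat T (tau x)) => [r| |] //=; rewrite ?lte_fin.
    - by move=> h; lra.
    - by move=> _; exact: ltry.
  have mDs : measurable Ds by exact: mS.
  have mDl : measurable Dl by exact: mL.
  case: (ltP 0 (pr P Dl)) => hDl.
  + have := H c c0; rewrite prE // lte_fin => /(_ hDl) hI.
    apply: (le_trans _ hI); apply: lee_wpmul2l => //.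
    apply: int_cmp; [exact: gn|exact: gn|] => y y0; split.
      by apply: wge0 => //; apply: condP01.
    apply: wmono => //; try exact: condP01.
    by apply: condP_cmp => //; exact: NtNl.
  + have hDl0 : pr P Dl = 0 by apply/le_anti; rewrite hDl pr_ge0.
    rewrite integral0_eq ?mule0 ?lee_fin ?ltW // => y /=; rewrite in_itv /= andbT => y0.
    have hz : condP P [set w | (y%:E < Tat T (tau w) - c%:E)%E] Ds = 0.
      apply: (@condP_null _ _ _ _ _ _ Dl (mA y c) mDs mDl _ hDl0).
      by move=> w /(NtNl y y0) [].
    by rewrite hz; case: wmW => _ [_ [h0 _]]; congr (_%:E); exact: h0.
Qed.
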